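(* Let $n$, $k$, $t$ be positive integers with $t\geq 2$, $k\geq t+2$ and $n\geq 2k+t+\delta_{2,q}$, and set $$h(n,k,t)={n-t\brack k-t}-q^{(k-t+1)(k-t)}{n-k-1\brack k-t}+2.$$ Then $h(n,k,t)>\frac{47}{48}{k-t+1\brack 1}{n-t-1\brack k-t-1}$.
   Context: $q$ is a prime power and ${m\brack r}$ denotes the Gaussian binomial coefficient $\prod_{i=0}^{r-1}\frac{q^{m-i}-1}{q^{r-i}-1}$ (equal to $1$ for $r=0$). $\delta_{a,b}$ is the Kronecker delta. (The quantity $h(n,k,t)$ equals the size of the family $\{F\in{V\brack k}: E\subseteq F,\ \dim(F\cap U_2)\geq t\}\cup\{U_1,U_2\}$ for $U_1,U_2\in{V\brack k}$, $E\in{U_1\brack t}$ with $U_1\cap U_2\in{E\brack t-1}$, where $\dim V=n$.) *)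

(* Defs.v *)
From mathcomp Require Import all_boot all_order all_algebra.
Set Implicit Arguments. Unset Strict Implicit. Unset Printing Implicit Defensive.
Import Order.TTheory GRing.Theory Num.Theory.
Local Open Scope ring_scope.

Definition prime_power (q : nat) : Prop :=
  exists p e : nat, prime p /\ (0 < e)%N /\ q = (p ^ e)%N.

Definition gbin (q m r : nat) : rat :=
  \prod_(i < r) (((q%:R : rat) ^+ (m - i) - 1) / ((q%:R : rat) ^+ (r - i) - 1)).

Definition h (q n k t : nat) : rat :=
  gbin q (n - t) (k - t)
  - (q%:R : rat) ^+ ((k - t + 1) * (k - t)) * gbin q (n - k - 1) (k - t) + 2.

(* Main.v *)
Require Import Defs.
From mathcomp Require Import all_boot all_order all_algebra.
From mathcomp Require Import ring lra zify.
Import Order.TTheory GRing.Theory Num.Theory.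
Local Open Scope ring_scope.
Lemma pow_gt1 (x : rat) m : 2 <= x -> (0 < m)%N -> 1 < x ^+ m.
Proof. move=> hx hm; rewrite exprn_egt1; [by rewrite -lt0n | lra]. Qed.

Lemma pow_ge1 (x : rat) m : 2 <= x -> 1 <= x ^+ m.
Proof. move=> hx; apply: exprn_ege1; lra. Qed.

Definition gb (x : rat) (m r : nat) : rat :=
  \prod_(i < r) ((x ^+ (m - i) - 1) / (x ^+ (r - i) - 1)).
Lemma gbinE q m r : gbin q m r = gb (q%:R) m r. Proof. by []. Qed.

Lemma gbin_recl (x : rat) N a : 2 <= x ->
  gb x N a.+1 = (x ^+ N - 1) / (x ^+ a.+1 - 1) * gb x N.-1 a.
Proof.
move=> hx; rewrite /gb big_ord_recl /= !subn0; congr (_ * _).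
apply: eq_bigr => i _; rewrite /bump /= add1n; congr ((_ ^+ _ - 1) / (_ ^+ _ - 1)); lia.
Qed.

Lemma gbin_gt0 (x : rat) m r : 2 <= x -> (r <= m)%N -> 0 < gb x m r.
Proof.
move=> hx hrm; apply: prodr_gt0 => i _; apply: divr_gt0; rewrite subr_gt0; apply: pow_gt1 => //; have := ltn_ord i; lia.
Qed.

Lemma gbin1 (x : rat) m : gb x m 1 = (x ^+ m - 1) / (x - 1).
Proof. by rewrite /gb big_ord1 /= !subn0 expr1. Qed.

Lemma bonf (v : nat -> rat) a : (forall i, (i < a)%N -> 0 <= v i <= 1) ->
  1 - \sum_(i < a) v i <= \prod_(i < a) (1 - v i) /\
  \prod_(i < a) (1 - v i) <= 1 - \sum_(i < a) v i + (\sum_(i < a) v i)^+2/2 - (\sum_(i < a) (v i)^+2)/2.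
Proof.
elim: a => [|a IH] hv; first by rewrite !big_ord0; split; lra.
have [h1 h2] : 1 - \sum_(i < a) v i <= \prod_(i < a) (1 - v i) /\
  \prod_(i < a) (1 - v i) <= 1 - \sum_(i < a) v i + (\sum_(i < a) v i)^+2/2 - (\sum_(i < a) (v i)^+2)/2.
  by apply: IH => i hi; apply: hv; lia.
have /andP[ha0 ha1] := hv a (ltnSn a).
have hP0 : 0 <= \prod_(i < a) (1 - v i).
  apply: prodr_ge0 => i _; have /andP[] := hv i (ltnW (ltn_ord i)); lra.
rewrite !big_ord_recr /=.
set P := \prod_(i < a) (1 - v i) in h1 h2 hP0 *.
set S := \sum_(i < a) v i in h1 h2 *.
set Q := \sum_(i < a) v i ^+ 2 in h2 *.
have hS0 : 0 <= S.
  rewrite /S; apply: sumr_ge0 => i _; have /andP[] := hv i (ltnW (ltn_ord i)); lra.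
have e1 : (1 - S) * v a <= P * v a by apply: ler_wpM2r.
have e2 : 0 <= (P - (1 - S)) * (1 - v a) by apply: mulr_ge0; lra.
have e3 : 0 <= S * v a by apply: mulr_ge0.
split.
nra.
nra.
Qed.

Lemma gbin_rec1 (x : rat) N a : 2 <= x -> (1 <= a)%N ->
  gb x N a = (x ^+ N - 1) / (x ^+ a - 1) * gb x (N - 1) (a - 1).
Proof. by case: a => [//|a] hx _; rewrite gbin_recl // !subn1. Qed.

Lemma aux1 (A B : rat) : 48 * A <= B -> A <= 1 / 48 * B. Proof. lra. Qed.
Lemma aux2 (P S Q1 Q2 : rat) : P <= 1 - S + Q1 - Q2 -> S - Q1 + Q2 <= 1 - P. Proof. lra. Qed.
Lemma aux3 (A t : rat) : 0 <= A -> t <= 1 / 48 -> 47 / 48 * A <= A * (1 - t). Proof. nra. Qed.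
Lemma aux4 (A B G P : rat) : 47 / 48 * A * G <= B * (1 - P) * G -> 47 / 48 * A * G < B * G - B * G * P + 2. Proof. lra. Qed.
Lemma aux5 (u v : rat) : 0 <= 1 - u -> 1 - u <= 1 - v -> 0 <= v -> 0 <= v <= 1.
Proof. move=> *; apply/andP; split; lra. Qed.
Lemma sub1_ge0 (y : rat) : 1 < y -> 0 <= y - 1. Proof. lra. Qed.

Lemma core (x : rat) N a : 2 <= x -> (1 <= a)%N -> (2 * a + 1 <= N)%N ->
  48 * (x ^+ a.+1 - 1) * (x ^+ a - x) <=
     (x ^+ 2 - 1) * (x ^+ N - 1) ->
  47%:R / 48%:R * gb x (a + 1) 1 * gb x (N - 1) (a - 1) <
  gb x N a - x ^+ ((a + 1) * a) * gb x (N - a - 1) a + 2.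
Proof.
move=> hx ha hN hnum.
set z := x ^+ a.+1.
set X := x ^+ a.
set Y := x ^+ N.
have hx1 : 1 < x by lra.
have hz : 1 < z by apply: pow_gt1.
have hX : 1 < X by apply: pow_gt1; lia.
have hY : 1 < Y by apply: pow_gt1; lia.
have hzX : z = x * X by rewrite /z exprS.
have hz0 : 0 < z - 1 by rewrite subr_gt0.
have hYm : 0 < Y - 1 by rewrite subr_gt0.
pose u i := (z - 1) / (x ^+ (N - i) - 1).
pose c := (z - 1) / (Y - 1).
pose v i := c * x ^+ i.
have hG : 0 < gb x (N - 1) (a - 1) by apply: (gbin_gt0 x _ _ hx); clear -ha hN; lia.
have hc0 : 0 <= c := divr_ge0 (sub1_ge0 _ hz) (sub1_ge0 _ hY).
have huv : forall i, (i < a)%N -> 0 <= 1 - u i <= 1 - v i.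
  move=> i hi.
  have eY : Y = x ^+ i * x ^+ (N - i) by rewrite /Y -exprD; congr (_ ^+ _); clear -hi hN; lia.
  have hW : 1 < x ^+ (N - i) by apply: (pow_gt1 _ _ hx); clear -hi hN; lia.
  have hxi : 1 <= x ^+ i by apply: pow_ge1.
  have hzW : z <= x ^+ (N - i) by rewrite /z (ler_eXn2l hx1); clear -hi hN; lia.
  have hW0 : 0 < x ^+ (N - i) - 1 by rewrite subr_gt0.
  have hY0 : 0 < Y - 1 by rewrite subr_gt0.
  apply/andP; split.
    by rewrite subr_ge0 /u (ler_pdivrMr _ _ hW0) mul1r lerD2r.
  rewrite lerD2l lerN2 /v /c /u (ler_pdivlMr _ _ hW0).
  have hw : z - 1 = (z - 1) / (Y - 1) * (Y - 1) by rewrite divfK; last by rewrite (gt_eqF hY0).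
  rewrite [e in _ <= e]hw.
  have : 0 <= (z - 1) / (Y - 1) * (x ^+ i - 1) by apply: mulr_ge0; [apply: divr_ge0; apply: ltW; [exact: hz0 | exact: hY0] | rewrite subr_ge0; exact: hxi].
  set w := (z - 1) / (Y - 1).
  rewrite eY => hw0.
  have -> : w * (x ^+ i * x ^+ (N - i) - 1) = w * x ^+ i * (x ^+ (N - i) - 1) + w * (x ^+ i - 1) by ring.
  by rewrite lerDl.
have hPu : \prod_(i < a) (1 - u i) <= \prod_(i < a) (1 - v i) by apply: ler_prod => i _; apply: huv.
have hv01 : forall i, (i < a)%N -> 0 <= v i <= 1.
  move=> i hi; have /andP[h1 h2] := huv i hi.
  apply: (aux5 (u i) (v i) h1 h2); exact: mulr_ge0 hc0 (exprn_ge0 _ (ltW (lt_trans ltr01 hx1))).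
have [_ hB] := bonf v a hv01.
have eS : \sum_(i < a) v i = c * \sum_(i < a) x ^+ i by rewrite mulr_sumr.
have eQ : \sum_(i < a) v i ^+ 2 = c ^+ 2 * \sum_(i < a) (x ^+ 2) ^+ i.
  rewrite mulr_sumr; apply: eq_bigr => i _; rewrite /v exprMn; congr (_ * _); by rewrite -!exprM mulnC.
have hs := subrX1 x a.
have hr := subrX1 (x ^+ 2) a.
rewrite -exprM mulnC exprM -/X in hr.
rewrite -/X in hs.
rewrite eS eQ in hB.
set s := \sum_(i < a) x ^+ i in hs hB.
set r := \sum_(i < a) (x ^+ 2) ^+ i in hr hB.
have eP : x ^+ ((a + 1) * a) * gb x (N - a - 1) a = gb x N a * \prod_(i < a) (1 - u i).
  have -> : x ^+ ((a + 1) * a) = \prod_(i < a) z by rewrite prodr_const card_ord exprM addn1.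
  rewrite /gb -!big_split /=; apply: eq_bigr => i _.
  have hi := ltn_ord i.
  have eY : x ^+ (N - i) = x ^+ (N - a - 1 - i) * z by rewrite /z -exprD; congr (_ ^+ _); clear -hi hN; lia.
  have h1 : 1 < x ^+ (N - i) by apply: (pow_gt1 _ _ hx); clear -hi hN; lia.
  have h2 : 1 < x ^+ (a - i) by apply: (pow_gt1 _ _ hx); clear -hi hN; lia.
  rewrite /u eY; rewrite eY in h1.
  field; by rewrite !subr_eq0 (gt_eqF h1) (gt_eqF h2).
have eG : gb x N a = (Y - 1) / (X - 1) * gb x (N - 1) (a - 1).
  by rewrite /Y /X gbin_rec1.
rewrite eP eG gbin1 addn1 -/z.
set G := gb x (N - 1) (a - 1) in hG *.
set P := \prod_(i < a) (1 - u i) in hPu *.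
set P' := \prod_(i < a) (1 - v i) in hPu hB.
have hxm : x - 1 != 0 by rewrite subr_eq0 (gt_eqF hx1).
have hx2 : 0 < x ^+ 2 - 1 by rewrite subr_gt0; apply: pow_gt1.
have hxm2 : x ^+ 2 - 1 != 0 by rewrite (gt_eqF hx2).
have es : s = (X - 1) / (x - 1) by rewrite hs; field.
have er : r = (X ^+ 2 - 1) / (x ^+ 2 - 1) by rewrite hr; field.
have E : (Y - 1) / (X - 1) * (c * s - (c * s) ^+ 2 / 2 + c ^+ 2 * r / 2) =
   (z - 1) / (x - 1) * (1 - c * (X - x) / (x ^+ 2 - 1)).
  rewrite es er /c hzX; field.
  by rewrite hxm hxm2 !subr_eq0 (gt_eqF hY) (gt_eqF hX).
rewrite -/z -/X -/Y in hnum.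
have hcs : c * (X - x) / (x ^+ 2 - 1) <= 1 / 48.
  rewrite (ler_pdivrMr _ _ hx2) /c mulrAC (ler_pdivrMr _ _ hYm).
  rewrite -mulrA; apply: aux1; rewrite mulrA; exact: hnum.
have hpos : 0 <= (Y - 1) / (X - 1) := divr_ge0 (sub1_ge0 _ hY) (sub1_ge0 _ hX).
have hA : 0 <= (z - 1) / (x - 1) := divr_ge0 (sub1_ge0 _ hz) (sub1_ge0 _ hx1).
have h1 : 1 - P' <= 1 - P by rewrite lerD2l lerN2.
have h2 : c * s - (c * s) ^+ 2 / 2 + c ^+ 2 * r / 2 <= 1 - P' by apply: aux2.
have K : 47 / 48 * ((z - 1) / (x - 1)) <= (Y - 1) / (X - 1) * (1 - P).
  apply: le_trans (ler_wpM2l hpos (le_trans h2 h1)); rewrite E.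
  set A := (z - 1) / (x - 1) in hA *.
  set t := c * (X - x) / (x ^+ 2 - 1) in hcs *.
  exact: aux3.
have := ler_wpM2r (ltW hG) K.
set A := (z - 1) / (x - 1).
set B := (Y - 1) / (X - 1).
move=> hK; exact: aux4.
Qed.


Lemma numA (X Y : rat) : 2 <= X -> 32 * X^+2 <= Y -> 48 * (2 * X - 1) * (X - 2) <= (2^+2 - 1) * (Y - 1).
Proof. move=> h1 h2; rewrite expr2 in h2 *; nra. Qed.
Lemma numB (x X Y : rat) : 3 <= x -> x <= X -> x^+4 * X^+2 <= Y -> 48 * (x*X - 1) * (X - x) <= (x^+2-1)*(Y-1).
Proof.
move=> h1 h2 h3.
have x0 : 0 <= x by lra.
have X0 : 0 <= X by lra.
have h9 : 3 * 3 <= x * x by apply: ler_pM.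
have h27 : 3 * 3 * 3 <= x * x * x by apply: ler_pM => //; apply: mulr_ge0.
have e4 : x ^+ 4 = x * x * x * x by rewrite !exprS expr0 mulr1 !mulrA.
have e2 : x ^+ 2 = x * x by rewrite expr2.
have eX : X ^+ 2 = X * X by rewrite expr2.
rewrite e4 e2 eX in h3 *.
set xx := x * x in h9 h27 h3 *.
have hxX : 1 <= x * X by rewrite -[1]mulr1; apply: ler_pM; lra.
have hA : (x * X - 1) * (X - x) <= (x * X) * X by apply: ler_pM; lra.
have hB : (3 * 3 * 3) * x <= xx * x * x by apply: ler_wpM2r.
have hB2 : (3 * 3 * 3) * x * (X * X) <= xx * x * x * (X * X) by apply: ler_wpM2r => //; apply: mulr_ge0.
have hC : 8 * (xx * x * x * (X * X)) <= (xx - 1) * (xx * x * x * (X * X)).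
  apply: ler_wpM2r; last lra.
  apply: mulr_ge0; [apply: mulr_ge0; [apply: mulr_ge0; lra|]|]; [lra | apply: mulr_ge0 => //].
have hD : (xx - 1) * (xx * x * x * (X * X)) <= (xx - 1) * Y by apply: ler_wpM2l => //; lra.
have hE : xx <= x * (X * X).
  rewrite /xx; apply: ler_wpM2l => //; have : 1 * x <= X * X by apply: ler_pM; lra.
  lra.
have hF : 0 <= x * (X * X) by apply: mulr_ge0 => //; apply: mulr_ge0.
have eA : x * X * X = x * (X * X) by rewrite mulrA.
have eB : 3 * 3 * 3 * x * (X * X) = 27 * (x * (X * X)) by ring.
rewrite eA in hA; rewrite eB in hB2.
move: hA hB2 hC hD hE hF; set m := x * (X * X); set M := xx * x * x * (X * X).
move=> hA hB2 hC hD hE hF.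
lra.
Qed.

Lemma pp_ge2 q : prime_power q -> (2 <= q)%N.
Proof.
case=> p [e [pp [he ->]]]; have := prime_gt1 pp.
case: e he => // e _ hp; rewrite expnS; have := expn_gt0 p e; rewrite (ltnW hp) /=; nia.
Qed.

Lemma hnum_ok (q a N : nat) : (2 <= q)%N -> (1 <= a)%N -> (2 * a + 4 + (q == 2%N) <= N)%N ->
  48 * ((q%:R : rat) ^+ a.+1 - 1) * ((q%:R : rat) ^+ a - q%:R) <=
     ((q%:R : rat) ^+ 2 - 1) * ((q%:R : rat) ^+ N - 1).
Proof.
move=> hq ha hN.
have hx1 : 1 < (q%:R : rat) by rewrite (ltr_nat _ 1 q).
case: (eqVneq q 2%N) => [eq2|ne2].
  subst q; rewrite exprS; apply: numA.
    by rewrite -[X in X <= _]expr1 (ler_eXn2l hx1).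
  have -> : (32 : rat) = 2 ^+ 5 by [].
  by rewrite -exprM -exprD (ler_eXn2l hx1); rewrite eqxx /= in hN; move: hN; clear; lia.
have hq3 : (3 <= q)%N by move: ne2 hq; clear; lia.
rewrite exprS; apply: numB.
- by rewrite (ler_nat _ 3 q).
- by rewrite -[X in X <= _]expr1 (ler_eXn2l hx1).
- by rewrite -exprM -exprD (ler_eXn2l hx1); move: hN; clear; lia.
Qed.

Theorem lemma2p6 (q n k t : nat) :
  prime_power q ->
  (0 < n)%N -> (0 < k)%N -> (0 < t)%N ->
  (2 <= t)%N -> (t + 2 <= k)%N ->
  (2 * k + t + (q == 2%N) <= n)%N ->
  h q n k t > (47%:R / 48%:R) * gbin q (k - t + 1) 1 * gbin q (n - t - 1) (k - t - 1).
Proof.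
move=> hpp hn hk ht ht2 htk hN.
have hq := pp_ge2 q hpp.
rewrite /h !gbinE.
have hN' : (2 * k + t <= n)%N by apply: leq_trans hN; apply: leq_addr.
have -> : (n - k - 1 = n - t - (k - t) - 1)%N by move: htk hN'; clear; lia.
apply: core.
- by rewrite (ler_nat _ 2 q).
- by move: htk; clear; lia.
- by move: ht htk hN'; clear; lia.
- apply: hnum_ok => //; first by move: htk; clear; lia.
  by move: htk ht2 hN; clear; case: (q == 2%N) => /=; lia.
Qed.
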